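(* Let $k$ be a field of characteristic zero, $S=k[x_1,x_2,x_3]$, and $(S,L)$ a triangularizable Lie–Rinehart algebra with basis $\alpha_1,\alpha_2,\alpha_3$ satisfying the Bézout condition, with enveloping algebra $U$. Let $\{f_l^i:i\in\{1,2\},l\in\{1,2,3\}\}\subset S$ and $\omega=\sum_{l=1}^3(f_l^2\alpha_2+f_l^1\alpha_1)\hat x_l\in\mathcal{X}^1$. If $\omega$ is a cocycle, then there exist unique $g_{11},g_{12},g_{22}\in S$ with $g_{11}\alpha_1(x_1)=f_1^1$, $g_{12}\alpha_1(x_1)=f_1^2$ and $g_{22}\alpha_2(x_2)=f_2^2-g_{12}\alpha_1(x_2)$, and these satisfy $$\omega\equiv d^0\big(\tfrac12g_{11}\alpha_1^2+g_{12}\alpha_2\alpha_1+\tfrac12g_{22}\alpha_2^2\big)\pmod{F_0\mathcal{X}^1}.$$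
   Context: Triangularizable: $L\subseteq\operatorname{Der}(S)$ an $S$-submodule and Lie subalgebra, free with basis of derivations $\alpha_1,\alpha_2,\alpha_3$, $\alpha_i(x_j)=0$ for $i>j$, $\alpha_1(x_1)\alpha_2(x_2)\alpha_3(x_3)\ne0$. Bézout: $\alpha_2(x_2),\alpha_2(x_3)$ coprime and $\alpha_1(x_1)$ coprime with $\alpha_1(x_2)\alpha_2(x_3)-\alpha_2(x_2)\alpha_1(x_3)$. In $U$, $[\alpha,s]=\alpha(s)$ for $\alpha\in L,s\in S$. $\mathcal{X}^q=U\otimes_k\operatorname{Hom}_k(\Lambda^qW,k)$ with $W=\operatorname{span}(x_1,x_2,x_3)$ and dual basis $\hat x_l$; $d^0(u)=\sum_k[u,x_k]\hat x_k$ and $d^1(\sum_ku_k\hat x_k)=\sum_{k<l}([u_k,x_l]-[u_l,x_k])\hat x_k\wedge\hat x_l$; $\omega$ is a cocycle if $d^1\omega=0$. $F_0\mathcal{X}^1=S\hat x_1\oplus S\hat x_2\oplus S\hat x_3$. *)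

(* Defs.v *)
From HB Require Import structures.
From mathcomp Require Import all_boot all_order all_algebra.
From mathcomp Require Import mpoly.
Set Implicit Arguments. Unset Strict Implicit. Unset Printing Implicit Defensive.
Import GRing.Theory.
Local Open Scope ring_scope.

(* S = k[x_1,x_2,x_3] is {mpoly k[3]}; x_{j+1} is 'X_j for j : 'I_3 (0-indexed). *)

Definition is_kder (k : fieldType) (D : {mpoly k[3]} -> {mpoly k[3]}) : Prop :=
  [/\ forall p q, D (p + q) = D p + D q,
      forall (c : k) p, D (c *: p) = c *: D p
    & forall p q, D (p * q) = D p * q + p * D q].

Definition sdiv (k : fieldType) (d p : {mpoly k[3]}) : Prop := exists q, p = q * d.
Definition sunit (k : fieldType) (d : {mpoly k[3]}) : Prop := exists e, d * e = 1.
Definition scoprime (k : fieldType) (p q : {mpoly k[3]}) : Prop :=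
  forall d, sdiv d p -> sdiv d q -> sunit d.

Definition comm (U : nzRingType) (u v : U) : U := u * v - v * u.

(* X^q for q = 0,1,2 as functions on ordered index tuples; W = span(x_1,x_2,x_3) *)
Definition d0 (k : fieldType) (U : nzRingType) (iota : {mpoly k[3]} -> U) (u : U)
  : 'I_3 -> U := fun l => comm u (iota 'X_l).

Definition d1 (k : fieldType) (U : nzRingType) (iota : {mpoly k[3]} -> U)
  (w : 'I_3 -> U) : 'I_3 -> 'I_3 -> U :=
  fun i j => comm (w i) (iota 'X_j) - comm (w j) (iota 'X_i).

Definition cocycle1 (k : fieldType) (U : nzRingType) (iota : {mpoly k[3]} -> U)
  (w : 'I_3 -> U) : Prop := forall i j : 'I_3, (i < j)%N -> d1 iota w i j = 0.

Definition inF0 (k : fieldType) (U : nzRingType) (iota : {mpoly k[3]} -> U)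
  (w : 'I_3 -> U) : Prop := forall l : 'I_3, exists s, w l = iota s.

(* Main.v *)
Require Import Defs.
From HB Require Import structures.
From mathcomp Require Import all_boot all_order all_algebra.
From mathcomp Require Import mpoly.
From mathcomp Require Import zify ring.
From Stdlib Require Import Classical.
Import GRing.Theory.
Local Open Scope ring_scope.

(* Part 1: k[x_1,...,x_n] satisfies Euclid's lemma (irreducibles are prime,
   with a degree-like measure), proved by induction on n via the
   isomorphism {mpoly k[n.+1]} ~ {poly {mpoly k[n]}}. *)
Set Implicit Arguments. Unset Strict Implicit. Unset Printing Implicit Defensive.

Section Gen.
Variable R : idomainType.
Definition dvdR (a b : R) := exists q, b = q * a.
Definition irredR (p : R) := [/\ p != 0, p \isn't a GRing.unit &
  forall a b, p = a * b -> a \is a GRing.unit \/ b \is a GRing.unit].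
Definition primeR (p : R) := forall a b, dvdR p (a * b) -> dvdR p a \/ dvdR p b.
Definition measR (mu : R -> nat) :=
  (forall a b, a != 0 -> b != 0 -> mu (a * b) = (mu a + mu b)%N) /\
  (forall a, a != 0 -> (mu a == 0%N) = (a \is a GRing.unit)).
Definition goodR := exists mu, measR mu /\ forall p, irredR p -> primeR p.

Lemma dvdR_refl a : dvdR a a. Proof. by exists 1; rewrite mul1r. Qed.
Lemma dvdR_trans a b c : dvdR a b -> dvdR b c -> dvdR a c.
Proof. by move=> [q ->] [r ->]; exists (r * q); rewrite mulrA. Qed.
Lemma dvdR_mull a b c : dvdR a b -> dvdR a (c * b).
Proof. by move=> [q ->]; exists (c * q); rewrite mulrA. Qed.
Lemma dvdR_mulr a b c : dvdR a b -> dvdR a (b * c).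
Proof. by rewrite mulrC; apply: dvdR_mull. Qed.
Lemma dvdR_D a b c : dvdR a b -> dvdR a c -> dvdR a (b + c).
Proof. by move=> [q ->] [r ->]; exists (q + r); rewrite mulrDl. Qed.
Lemma dvdR_B a b c : dvdR a b -> dvdR a c -> dvdR a (b - c).
Proof. by move=> [q ->] [r ->]; exists (q - r); rewrite mulrBl. Qed.
Lemma dvdR_0 a : dvdR a 0. Proof. by exists 0; rewrite mul0r. Qed.
Lemma dvdR_unit u x : u \is a GRing.unit -> dvdR u x.
Proof. by move=> Hu; exists (x / u); rewrite divrK. Qed.
Lemma unit_dvdR a u : u \is a GRing.unit -> dvdR a u -> a \is a GRing.unit.
Proof. by move=> Hu [q Hq]; move: Hu; rewrite Hq unitrM => /andP[]. Qed.

Section WithMu.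
Variable mu : R -> nat.
Hypothesis Hm : measR mu.

Lemma mu_pos a : a != 0 -> a \isn't a GRing.unit -> (0 < mu a)%N.
Proof. by move=> a0 au; move: (proj2 Hm a a0); rewrite (negbTE au); case: (mu a). Qed.

Lemma atomic a : a != 0 -> a \isn't a GRing.unit ->
  exists p, irredR p /\ dvdR p a.
Proof.
have: (mu a <= mu a)%N by [].
move: {2}(mu a) => N; elim: N a => [|N IH] a Ha a0 au.
  by have := mu_pos a0 au; lia.
case: (classic (irredR a)) => [Hi|Hni]; first by exists a; split=> //; apply: dvdR_refl.
have [b [c [Habc [bu cu]]]] : exists b c, a = b * c /\ b \isn't a GRing.unit /\ c \isn't a GRing.unit.
  apply: NNPP => H; apply: Hni; split=> // b c Hbc.
  case: (boolP (b \is a GRing.unit)) => [|bu]; first by left.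
  case: (boolP (c \is a GRing.unit)) => [|cu]; first by right.
  by exfalso; apply: H; exists b, c.
have b0 : b != 0 by apply: contraNneq a0 => b0; rewrite Habc b0 mul0r.
have c0 : c != 0 by apply: contraNneq a0 => c0; rewrite Habc c0 mulr0.
have := mu_pos c0 cu; move: Ha; rewrite Habc (proj1 Hm _ _ b0 c0) => Ha Hc.
have [p [Hp Hpb]] := IH b ltac:(lia) b0 bu.
by exists p; split=> //; apply: dvdR_mulr.
Qed.

Hypothesis Hprime : forall p, irredR p -> primeR p.

Lemma euclidR a b x : (forall d, dvdR d a -> dvdR d b -> d \is a GRing.unit) ->
  dvdR a (x * b) -> dvdR a x.
Proof.
have [->|a0] := eqVneq a 0.
  move=> Hc [q]; rewrite mulr0 => /eqP; rewrite mulf_eq0 => /orP[/eqP->|/eqP b0].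
    exact: dvdR_0.
  have := Hc 0 (dvdR_refl _); rewrite b0 => /(_ (dvdR_refl _)).
  by rewrite unitr0.
have: (mu a <= mu a)%N by [].
move: {2}(mu a) => N; elim: N a a0 x => [|N IH] a a0 x Ha Hc Hd.
  have : a \is a GRing.unit by rewrite -(proj2 Hm a a0); move: Ha; rewrite leqn0.
  by move=> au; apply: dvdR_unit.
case: (boolP (a \is a GRing.unit)) => [au|au]; first by apply: dvdR_unit.
have [p [[p0 pu pirr] [a' Ha']]] := atomic a0 au.
have [[x' Hx']|Hpb] := Hprime (And3 p0 pu pirr) (dvdR_trans (ex_intro _ a' Ha') Hd); last first.
  by have := Hc p (ex_intro _ a' Ha') Hpb; rewrite (negbTE pu).
have a'0 : a' != 0 by apply: contraNneq a0 => e; rewrite Ha' e mul0r.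
have Hd' : dvdR a' (x' * b).
  case: Hd => q; rewrite Hx' Ha' -mulrA [p * b]mulrC mulrA mulrA => /(mulIf p0) ->.
  by exists q.
have Hc' d : dvdR d a' -> dvdR d b -> d \is a GRing.unit.
  move=> H1 H2; apply: (Hc d _ H2); apply: (dvdR_trans H1); exists p; rewrite mulrC; exact: Ha'.
have := mu_pos p0 pu; move: Ha; rewrite Ha' (proj1 Hm _ _ a'0 p0) => Ha Hp.
have [y Hy] := IH a' a'0 x' ltac:(lia) Hc' Hd'.
by exists y; rewrite Hx' Hy mulrA.
Qed.
End WithMu.
End Gen.

Section PolyGood.
Variable R : idomainType.
Variable mu : R -> nat.
Hypothesis Hm : measR mu.
Hypothesis Hprime : forall p : R, irredR p -> primeR p.

Definition cdvd (c : R) (f : {poly R}) := forall i, dvdR c f`_i.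

Lemma cdvdP c f : dvdR c%:P f <-> cdvd c f.
Proof.
split => [[q ->] i|]; first by rewrite coefMC; exists q`_i.
elim/poly_ind: f => [|f a IH] H; first by exists 0; rewrite mul0r.
have Hf : cdvd c f by move=> i; have := H i.+1; rewrite coefD coefMX coefC /= addr0.
have [r Hr] : dvdR c a by have := H 0%N; rewrite coefD coefMX coefC /= add0r.
have [q ->] := IH Hf; exists (q * 'X + r%:P).
by rewrite Hr polyCM mulrDl mulrAC.
Qed.

Lemma polyC_unitR (c : R) : (c%:P \is a GRing.unit) = (c \is a GRing.unit).
Proof.
rewrite poly_unitE size_polyC coefC /=.
by have [->|c0] := eqVneq c 0; rewrite ?unitr0 ?andbF.
Qed.

Lemma take_poly1 (f : {poly R}) : take_poly 1 f = (f`_0)%:P.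
Proof. by apply/polyP => i; rewrite coef_take_poly coefC; case: i. Qed.

Lemma primeC (p : R) : primeR p ->
  forall f g : {poly R}, dvdR p%:P (f * g) -> dvdR p%:P f \/ dvdR p%:P g.
Proof.
move=> Hp f g.
have: (size f + size g <= size f + size g)%N by [].
move: {2}(size f + size g)%N => N; elim: N f g => [|N IH] f g Hs H.
  left; have /eqP -> : f == 0 by rewrite -size_poly_eq0; apply/eqP; lia.
  exact: dvdR_0.
have [->|f0] := eqVneq f 0; first by left; exact: dvdR_0.
have [->|g0] := eqVneq g 0; first by right; exact: dvdR_0.
wlog: f g Hs H f0 g0 / dvdR p f`_0.
  move=> W; have := (proj1 (cdvdP _ _) H 0%N); rewrite coef0M => /Hp [Hd|Hd].
    exact: W.
  have := W g f; rewrite addnC mulrC => /(_ Hs H g0 f0 Hd).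
  by case; [right|left].
move=> Hf0.
set f' := drop_poly 1 f.
have Ef : f = (f`_0)%:P + f' * 'X by rewrite -{1}(poly_take_drop 1 f) expr1 take_poly1.
have H1 : dvdR p%:P (f' * g).
  apply/cdvdP => i.
  have Efg : f' * g * 'X = f * g - (f`_0)%:P * g.
    by rewrite [in f * g]Ef mulrDl addrAC subrr add0r mulrAC.
  have := congr1 (fun q : {poly R} => q`_i.+1) Efg; rewrite /= coefMX /= => ->.
  rewrite coefB coefCM; apply: dvdR_B; first exact: (proj1 (cdvdP _ _) H).
  exact: dvdR_mulr.
have Hsz : (size f' + size g <= N)%N.
  rewrite /f' size_drop_poly; move: f0; rewrite -size_poly_gt0; lia.
case: (IH f' g Hsz H1) => [Hf'|Hg]; last by right.
left; rewrite Ef; apply: dvdR_D; last exact: dvdR_mulr.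
by case: Hf0 => q ->; exists q%:P; rewrite polyCM.
Qed.

Definition primP (g : {poly R}) := forall d, cdvd d g -> d \is a GRing.unit.

Lemma content (f : {poly R}) : f != 0 ->
  exists c g, [/\ f = c%:P * g, c != 0 & primP g].
Proof.
have: (mu (lead_coef f) <= mu (lead_coef f))%N by [].
move: {2}(mu (lead_coef f)) => N; elim: N f => [|N IH] f Hs f0.
  exists 1, f; split; rewrite ?mul1r ?oner_neq0 // => d /cdvdP [q Hq].
  have q0 : q != 0 by apply: contraNneq f0 => e; rewrite Hq e mul0r.
  have d0 : d != 0 by apply: contraNneq f0 => e; rewrite Hq e mulr0.
  move: Hs; rewrite Hq lead_coefM lead_coefC (proj1 Hm) ?lead_coef_eq0 //.
  by rewrite -(proj2 Hm d d0); case: (mu d) => //= n; lia.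
case: (classic (primP f)) => [Hp|Hnp].
  by exists 1, f; split; rewrite ?mul1r ?oner_neq0.
have [d [Hd du]] : exists d, cdvd d f /\ d \isn't a GRing.unit.
  apply: NNPP => H; apply: Hnp => d Hd; apply: NNPP => du.
  by apply: H; exists d; split => //; apply/negP.
have [q Hq] := proj2 (cdvdP _ _) Hd.
have q0 : q != 0 by apply: contraNneq f0 => e; rewrite Hq e mul0r.
have d0 : d != 0 by apply: contraNneq f0 => e; rewrite Hq e mulr0.
have := mu_pos Hm d0 du; move: Hs.
rewrite Hq lead_coefM lead_coefC (proj1 Hm) ?lead_coef_eq0 // => Hs Hd0.
have [c [g [Hqc c0 Hg]]] := IH q ltac:(lia) q0.
exists (c * d), g; split => //; last by rewrite mulf_neq0.
by rewrite Hqc polyCM mulrAC.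
Qed.

Lemma prim_dvd_scal (s : {poly R}) (a : R) (f : {poly R}) :
  primP s -> a != 0 -> dvdR s (a%:P * f) -> dvdR s f.
Proof.
move=> Ps; have: (mu a <= mu a)%N by [].
move: {2}(mu a) => N; elim: N a f => [|N IH] a f Ha a0 [q Hq].
  have au : a \is a GRing.unit by rewrite -(proj2 Hm a a0); move: Ha; case: (mu a).
  exists (a^-1%:P * q); rewrite -mulrA -Hq mulrA -polyCM mulVr // mul1r.
  done.
case: (boolP (a \is a GRing.unit)) => [au|au].
  by exists (a^-1%:P * q); rewrite -mulrA -Hq mulrA -polyCM mulVr // mul1r.
have [p [[p0 pu pirr] [a' Ha']]] := atomic Hm a0 au.
have Hps : dvdR p%:P (q * s).
  by exists (a'%:P * f); rewrite -Hq Ha' polyCM mulrAC.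
have [[q' Hq']|Hs] := primeC (Hprime (And3 p0 pu pirr)) Hps; last first.
  by have := Ps p (proj1 (cdvdP _ _) Hs); rewrite (negbTE pu).
have a'0 : a' != 0 by apply: contraNneq a0 => e; rewrite Ha' e mul0r.
have p0' : p%:P != 0 :> {poly R} by rewrite polyC_eq0.
have Hq2 : a'%:P * f = q' * s.
  apply: (mulIf p0'); move: Hq; rewrite Ha' Hq' polyCM.
  by rewrite mulrAC => ->; rewrite mulrAC.
have := mu_pos Hm p0 pu; move: Ha; rewrite Ha' (proj1 Hm _ _ a'0 p0) => Ha Hp.
exact: (IH a' f ltac:(lia) a'0 (ex_intro _ q' Hq2)).
Qed.

Definition muP (f : {poly R}) := ((size f).-1 + mu (lead_coef f))%N.

Lemma measP : measR muP.
Proof.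
split=> [f g f0 g0|f f0].
  rewrite /muP size_mul // lead_coefM (proj1 Hm) ?lead_coef_eq0 //.
  move: f0 g0; rewrite -!size_poly_gt0; lia.
rewrite /muP poly_unitE.
have [Hs|Hs] := eqVneq (size f) 1%N.
  rewrite Hs /= add0n (proj2 Hm) ?lead_coef_eq0 // lead_coefE Hs.
  done.
apply/negbTE; move: f0 Hs; rewrite -size_poly_gt0; lia.
Qed.

Lemma irred_primeP (f : {poly R}) : irredR f -> primeR f.
Proof.
move=> [f0 fu firr] g h Hgh.
case: (leqP (size f) 1) => Hs.
  have Ef := size1_polyC Hs; set c := f`_0 in Ef.
  have c0 : c != 0 by apply: contraNneq f0 => e; rewrite Ef e.
  have Hc : irredR c.
    split=> //; first by rewrite -polyC_unitR -Ef.
    move=> a b Hab; have := firr a%:P b%:P; rewrite -polyCM -Hab -Ef.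
    by rewrite !polyC_unitR; apply.
  by rewrite Ef; apply: primeC (Hprime Hc) _ _ _; rewrite -Ef.
have Pf : primP f.
  move=> d /cdvdP [q Hq].
  have d0 : d != 0 by apply: contraNneq f0 => e; rewrite Hq e mulr0.
  case: (firr q d%:P Hq) => [qu|]; last by rewrite polyC_unitR.
  move: Hs; rewrite Hq mulrC size_Cmul //.
  by move: qu; rewrite poly_unitE => /andP[/eqP->].
case: (classic (dvdR f g)) => Hfg; [by left | right].
have Ed := Pdiv.Idomain.divp_eq g f.
set r := g %% f in Ed.
have lc0 := Pdiv.Idomain.lc_expn_scalp_neq0 g f.
have r0 : r != 0.
  apply: contra_notN Hfg => /eqP r0; apply: (prim_dvd_scal Pf lc0).
  by exists (g %/ f); rewrite mul_polyC Ed r0 addr0.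
have Hrh : dvdR f (r * h).
  have -> : r * h = (lead_coef f ^+ scalp g f)%:P * (g * h) - (g %/ f * h) * f.
    by rewrite mulrA mul_polyC Ed mulrDl addrAC mulrAC subrr add0r.
  by apply: dvdR_B; [apply: dvdR_mull | exists (g %/ f * h)].
have Hrs : (size r < size f)%N by rewrite Pdiv.Idomain.ltn_modp.
suff: forall N (s : {poly R}), (size s <= N)%N -> (size s < size f)%N -> s != 0 ->
    dvdR f (s * h) -> dvdR f h by move=> /(_ _ r (leqnn _) Hrs r0 Hrh).
elim=> [|N IH] s HsN Hsf s0 Hsh.
  by move: s0; rewrite -size_poly_gt0; lia.
have Ed2 := Pdiv.Idomain.divp_eq f s.
set r2 := f %% s in Ed2.
have lc2 := Pdiv.Idomain.lc_expn_scalp_neq0 f s.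
have Hr2h : dvdR f (r2 * h).
  have -> : r2 * h = (lead_coef s ^+ scalp f s)%:P * f * h - (f %/ s) * (s * h).
    by rewrite mul_polyC Ed2 mulrDl addrAC mulrA mulrAC subrr add0r.
  by apply: dvdR_B; [exists ((lead_coef s ^+ scalp f s)%:P * h); rewrite mulrAC | apply: dvdR_mull].
have Hr2s : (size r2 < size s)%N by rewrite Pdiv.Idomain.ltn_modp.
have [r20|r20] := eqVneq r2 0; last first.
  exact: (IH r2 (leq_trans Hr2s HsN) (ltn_trans Hr2s Hsf) r20 Hr2h).
have [c [s1 [Es c0 Ps1]]] := content s0.
have [t Ht] : dvdR s1 f.
  apply: (prim_dvd_scal Ps1 lc2); exists (f %/ s * c%:P).
  by rewrite mul_polyC Ed2 r20 addr0 Es mulrA.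
have s10 : s1 != 0 by apply: contraNneq s0 => e; rewrite Es e mulr0.
have t0 : t != 0 by apply: contraNneq f0 => e; rewrite Ht e mul0r.
case: (firr t s1 Ht) => [tu|s1u].
  move: Hsf; rewrite Ht Es size_Cmul // size_mul //.
  by move: tu; rewrite poly_unitE => /andP[/eqP->]; rewrite add1n /= ltnn.
apply: (prim_dvd_scal Pf c0).
have -> : c%:P * h = s1^-1 * (s * h).
  by rewrite Es [c%:P * s1]mulrC -!mulrA mulKr.
exact: dvdR_mull.
Qed.

Lemma goodP : goodR {poly R}.
Proof. by exists muP; split; [exact: measP | exact: irred_primeP]. Qed.

End PolyGood.

Lemma mpoly_hom_eq (k : nzRingType) (n : nat) (A : nzRingType)
  (F G : {rmorphism {mpoly k[n]} -> A}) :
  (forall c, F c%:MP = G c%:MP) -> (forall i, F 'X_i = G 'X_i) -> F =1 G.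
Proof.
move=> HC HX p; rewrite (mpolyE p) !rmorph_sum; apply: eq_bigr => m _.
rewrite -mul_mpolyC !rmorphM HC mpolyXE_id !rmorph_prod; congr (_ * _).
by apply: eq_bigr => i _; rewrite !rmorphXn HX.
Qed.

Lemma poly_hom_eq (A B : nzRingType) (F G : {rmorphism {poly A} -> B}) :
  (forall c, F c%:P = G c%:P) -> F 'X = G 'X -> F =1 G.
Proof.
move=> HC HX p; rewrite -(coefK p) poly_def !rmorph_sum; apply: eq_bigr => i _.
by rewrite -mul_polyC !rmorphM HC !rmorphXn HX.
Qed.

Section Iso.
Variable (k : fieldType) (n : nat).
Definition phi : {poly {mpoly k[n]}} -> {mpoly k[n.+1]} :=
  horner_eval ('X_ord_max) \o map_poly (@mwiden n k).

Lemma muniXmax : muni ('X_(@ord_max n) : {mpoly k[n.+1]}) = 'X.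
Proof.
rewrite /muni mmapX mmap1U; case: splitP => //; case=> j lt_jn /eqP /=.
by have := lt_jn; rewrite ltn_neqAle eq_sym=> /andP[/negbTE->].
Qed.

Lemma muniXlift (i : 'I_n) : muni ('X_(lift ord_max i) : {mpoly k[n.+1]}) = ('X_i)%:P.
Proof.
rewrite /muni mmapX mmap1U; case: splitP=> [j eq|j] /=.
  by congr ('X__)%:P; apply/val_inj=> /=; rewrite -eq /= /bump leqNgt ltn_ord.
rewrite ord1 /= addn0 /bump leqNgt ltn_ord /= => /eqP.
by rewrite add0n => /eqP Hi; move: (ltn_ord i); rewrite Hi ltnn.
Qed.

Lemma phiK : cancel (@muni n k) phi.
Proof.
move=> p; apply: (@mpoly_hom_eq k n.+1 _ (phi \o @muni n k) idfun) => [c|i] /=.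
  by rewrite muniC /phi /= map_polyC /= horner_evalE hornerC mwidenC.
have [j ->|->] := unliftP ord_max i.
  by rewrite muniXlift /phi /= map_polyC /= horner_evalE hornerC mwidenX mnmwiden1;
  congr 'X__; apply/val_inj => /=; rewrite /bump leqNgt ltn_ord.
by rewrite muniXmax /phi /= map_polyX /= horner_evalE hornerX.
Qed.
Lemma muni_mwiden (c : {mpoly k[n]}) : muni (mwiden c) = c%:P.
Proof.
apply: (@mpoly_hom_eq k n _ (@muni n k \o @mwiden n k) polyC) => [d|i] /=.
  by rewrite mwidenC muniC.
rewrite mwidenX mnmwiden1.
have -> : widen_ord (leqnSn n) i = lift ord_max i.
  by apply/val_inj => /=; rewrite /bump leqNgt ltn_ord.
exact: muniXlift.
Qed.

Lemma muniK : cancel phi (@muni n k).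
Proof.
move=> p; apply: (@poly_hom_eq _ _ (@muni n k \o phi) idfun) => [c|] /=.
  by rewrite /phi /= map_polyC /= horner_evalE hornerC muni_mwiden.
by rewrite /phi /= map_polyX /= horner_evalE hornerX muniXmax.
Qed.
End Iso.

Lemma good_iso (R S : idomainType) (f : {rmorphism S -> R}) (g : R -> S) :
  cancel f g -> cancel g f -> goodR R -> goodR S.
Proof.
move=> fK gK [mu [[Hm1 Hm2] Hp]].
have finj := can_inj fK.
have gM x y : g (x * y) = g x * g y by apply: finj; rewrite rmorphM !gK.
have f0 x : (f x != 0) = (x != 0) by rewrite -(rmorph0 f) (inj_eq finj).
have funit x : (f x \is a GRing.unit) = (x \is a GRing.unit).
  apply/idP/idP => [/unitrPr [y Hy]|]; last exact: rmorph_unit.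
  by apply/unitrPr; exists (g y); apply: finj; rewrite rmorphM gK Hy rmorph1.
exists (mu \o f); split; first split.
- by move=> a b a0 b0 /=; rewrite rmorphM Hm1 // f0.
- by move=> a a0 /=; rewrite Hm2 ?f0 // funit.
- move=> p [p0 pu pirr] a b [q Hq].
  have Hfp : irredR (f p).
    split; rewrite ?f0 ?funit //.
    move=> x y Hxy; have := pirr (g x) (g y); rewrite -gM -Hxy fK.
    by move=> /(_ erefl); case=> H; [left; rewrite -(gK x) | right; rewrite -(gK y)]; rewrite funit.
  have : dvdR (f p) (f a * f b) by exists (f q); rewrite -!rmorphM Hq.
  case/(Hp _ Hfp) => [[r Hr]|[r Hr]]; [left|right]; exists (g r);
    by apply: finj; rewrite rmorphM gK -Hr.
Qed.

Section K.
Variable k : fieldType.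

Lemma mpoly0C (p : {mpoly k[0]}) : p = (p@_0)%:MP.
Proof.
apply/mpolyP => m; rewrite mcoeffC.
have -> : m = 0%MM by apply/mnmP => -[].
by rewrite eqxx mulr1.
Qed.

Lemma good0 : goodR {mpoly k[0]}.
Proof.
have U (a : {mpoly k[0]}) : a != 0 -> a \is a GRing.unit.
  move=> a0; rewrite (mpoly0C a) in a0 *.
  have c0 : a@_0 != 0 by apply: contraNneq a0 => ->.
  by apply/unitrPr; exists ((a@_0)^-1)%:MP; rewrite -mpolyCM divff.
exists (fun _ => 0%N); split; first split.
- by [].
- by move=> a a0; rewrite U.
- by move=> p [p0 pu _]; rewrite U in pu.
Qed.

Lemma good_mpoly n : goodR {mpoly k[n]}.
Proof.
elim: n => [|n [mu [Hm Hp]]]; first exact: good0.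
exact: (good_iso (@phiK k n) (@muniK k n) (goodP Hm Hp)).
Qed.

End K.

Unset Implicit Arguments. Set Strict Implicit.

Lemma euclid3 (k : fieldType) (a b x : {mpoly k[3]}) :
  scoprime a b -> sdiv a (x * b) -> sdiv a x.
Proof.
have [mu [Hm Hp]] := good_mpoly k 3.
move=> Hc Hd; apply: (euclidR Hm Hp _ Hd) => d H1 H2.
by apply/unitrPr; exact: Hc d H1 H2.
Qed.
Arguments euclid3 {k a b x}.

Lemma zmod3 (V : zmodType) (x y z x' y' z' : V) :
  x + y + z - (x' + y' + z') = (x - x') + (y - y') + (z - z').
Proof. by rewrite !opprD addrACA [x + y + _]addrACA. Qed.

Lemma zmod3D (V : zmodType) (x y z x' y' z' : V) :
  x + y + z + (x' + y' + z') = (x + x') + (y + y') + (z + z').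
Proof. by rewrite addrACA [x + y + _]addrACA. Qed.

Lemma zmod4 (V : zmodType) (X Y Z W : V) : X + Y + (Z + W) - X = Y + Z + W.
Proof. by rewrite addrAC [X + Y - X]addrC addKr addrA. Qed.

Lemma lincomb {R : zmodType} {X Y L R0 : R} : L = R0 -> X - Y = L - R0 -> X = Y.
Proof. by move=> -> /eqP; rewrite subrr subr_eq0 => /eqP. Qed.

Theorem lemma4p1
  (k : fieldType) (hchar : [pchar k] =i pred0)
  (alpha : 'I_3 -> {mpoly k[3]} -> {mpoly k[3]})
  (hder : forall i, is_kder (alpha i))
  (htri : forall i j : 'I_3, (j < i)%N -> alpha i 'X_j = 0)
  (hdiag : alpha 0 'X_0 * alpha 1 'X_1 * alpha 2 'X_2 != 0)
  (hbez1 : scoprime (alpha 1 'X_1) (alpha 1 'X_2))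
  (hbez2 : scoprime (alpha 0 'X_0)
             (alpha 0 'X_1 * alpha 1 'X_2 - alpha 1 'X_1 * alpha 0 'X_2))
  (U : nzRingType) (iota : {rmorphism {mpoly k[3]} -> U})
  (hiota : injective iota) (a : 'I_3 -> U)
  (hcommS : forall (i : 'I_3) s, comm (a i) (iota s) = iota (alpha i s))
  (hbracket : forall i j : 'I_3, exists c : 'I_3 -> {mpoly k[3]},
      (forall s, alpha i (alpha j s) - alpha j (alpha i s)
                 = \sum_(m < 3) c m * alpha m s)
      /\ comm (a i) (a j) = \sum_(m < 3) iota (c m) * a m)
  (f1 f2 : 'I_3 -> {mpoly k[3]}) :
  let omega := fun l : 'I_3 => iota (f2 l) * a 1 + iota (f1 l) * a 0 in
  cocycle1 iota omega ->
  exists g11 g12 g22 : {mpoly k[3]},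
    [/\ g11 * alpha 0 'X_0 = f1 0,
        g12 * alpha 0 'X_0 = f2 0,
        g22 * alpha 1 'X_1 = f2 1 - g12 * alpha 0 'X_1,
        (forall h11 h12 h22 : {mpoly k[3]},
           h11 * alpha 0 'X_0 = f1 0 ->
           h12 * alpha 0 'X_0 = f2 0 ->
           h22 * alpha 1 'X_1 = f2 1 - h12 * alpha 0 'X_1 ->
           [/\ h11 = g11, h12 = g12 & h22 = g22])
      & inF0 iota (fun l => omega l
           - d0 iota (iota ((2%:R : k)^-1 *: g11) * (a 0 * a 0)
                      + iota g12 * (a 1 * a 0)
                      + iota ((2%:R : k)^-1 *: g22) * (a 1 * a 1)) l)].
Proof.
move=> omega Hcoc.
set A := alpha 0 'X_0; set B := alpha 0 'X_1; set C := alpha 0 'X_2.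
set D := alpha 1 'X_1; set E := alpha 1 'X_2.
have h10 : alpha 1 'X_0 = 0 by apply: htri.
have A0 : A != 0 by move: hdiag; rewrite !mulf_eq0 !negb_or => /andP[/andP[]].
have D0 : D != 0 by move: hdiag; rewrite !mulf_eq0 !negb_or => /andP[/andP[]].
have cm (s t : {mpoly k[3]}) (i : 'I_3) :
    comm (iota s * a i) (iota t) = iota (s * alpha i t).
  have hc := hcommS i t; rewrite /comm in hc *.
  have e : iota t * iota s = iota s * iota t by rewrite -!rmorphM mulrC.
  rewrite [iota t * (iota s * _)]mulrA e -[iota s * iota t * _]mulrA.
  by rewrite -[iota s * a i * _]mulrA -mulrBr hc rmorphM.
have commD (u v w : U) : comm (u + v) w = comm u w + comm v w.
  by rewrite /comm mulrDl mulrDr opprD addrACA.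
have hco (i j : 'I_3) : (i < j)%N ->
    f2 i * alpha 1 'X_j + f1 i * alpha 0 'X_j = f2 j * alpha 1 'X_i + f1 j * alpha 0 'X_i.
  move=> Hij; have := Hcoc i j Hij; rewrite /d1 /omega !commD !cm -!rmorphD -rmorphB.
  by rewrite -(rmorph0 iota) => /hiota /eqP; rewrite subr_eq0 => /eqP.
have e01 : f1 1 * A = f2 0 * D + f1 0 * B.
  by have := hco 0 1 erefl; rewrite h10 mulr0 add0r => ->.
have e02 : f1 2 * A = f2 0 * E + f1 0 * C.
  by have := hco 0 2 erefl; rewrite h10 mulr0 add0r => ->.
have e12 : f2 1 * E + f1 1 * C = f2 2 * D + f1 2 * B := hco 1 2 erefl.
have [g11 Hg11] : sdiv A (f1 0).
  apply: (euclid3 hbez2); exists (f1 1 * E - f1 2 * D).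
  have -> : (f1 1 * E - f1 2 * D) * A = E * (f1 1 * A) - D * (f1 2 * A) by rewrite /A /B /C /D /E; ring.
  by rewrite e01 e02; rewrite /A /B /C /D /E; ring.
have [g12 Hg12] : sdiv A (f2 0).
  apply: (euclid3 hbez2); exists (B * f1 2 - C * f1 1).
  have -> : (B * f1 2 - C * f1 1) * A = B * (f1 2 * A) - C * (f1 1 * A) by rewrite /A /B /C /D /E; ring.
  by rewrite e01 e02 Hg11; rewrite /A /B /C /D /E; ring.
have h11 : f1 1 = g11 * B + g12 * D.
  by apply: (mulIf A0); rewrite e01 Hg11 Hg12; rewrite /A /B /C /D /E; ring.
have h12 : f1 2 = g11 * C + g12 * E.
  by apply: (mulIf A0); rewrite e02 Hg11 Hg12; rewrite /A /B /C /D /E; ring.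
have e3 : (f2 1 - g12 * B) * E = (f2 2 - g12 * C) * D.
  apply: (lincomb e12); rewrite h11 h12; rewrite /A /B /C /D /E; ring.
have [g22 Hg22] : sdiv D (f2 1 - g12 * B).
  by apply: (euclid3 hbez1); exists (f2 2 - g12 * C).
have h22 : f2 2 = g12 * C + g22 * E.
  apply: (mulIf D0); apply/eqP; rewrite -subr_eq0; apply/eqP.
  have -> : f2 2 * D - (g12 * C + g22 * E) * D = (f2 2 - g12 * C) * D - (g22 * D) * E by rewrite /A /B /C /D /E; ring.
  by rewrite -e3 -Hg22 subrr.
exists g11, g12, g22; split; try by [].
- move=> x y z Hx Hy Hz.
  have ex : x = g11 by apply: (mulIf A0); rewrite Hx Hg11.
  have ey : y = g12 by apply: (mulIf A0); rewrite Hy Hg12.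
  by split=> //; apply: (mulIf D0); rewrite Hz ey Hg22.
move=> l.
have [hl1 hl2] : f1 l = g11 * alpha 0 'X_l + g12 * alpha 1 'X_l /\
                 f2 l = g12 * alpha 0 'X_l + g22 * alpha 1 'X_l.
  case: l => [[|[|[|//]]] Hl].
  - have -> : Ordinal Hl = 0 by apply/val_inj.
    by rewrite h10 !mulr0 !addr0 Hg11 Hg12.
  - have -> : Ordinal Hl = 1 by apply/val_inj.
    by rewrite h11 -Hg22; split=> //; rewrite addrC subrK.
  - by have -> : Ordinal Hl = 2 by apply/val_inj.
have swL (x : U) (i : 'I_3) t :
    x * a i * iota t = x * iota t * a i + x * iota (alpha i t).
  have sw : a i * iota t = iota t * a i + iota (alpha i t).
    by rewrite -hcommS /comm addrC subrK.
  by rewrite -mulrA sw mulrDr mulrA.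
have cm2 (h t : {mpoly k[3]}) (i j : 'I_3) :
    comm (iota h * (a i * a j)) (iota t) = iota (h * alpha i t) * a j
      + iota (h * alpha j t) * a i + iota (h * alpha i (alpha j t)).
  rewrite /comm !mulrA !swL !mulrDl -!rmorphM [t * h]mulrC.
  exact: zmod4.
pose L p q r := iota p * a 0 + iota q * a 1 + iota r.
have LD p q r p' q' r' : L p q r + L p' q' r' = L (p + p') (q + q') (r + r').
  by rewrite /L zmod3D !rmorphD !mulrDl.
have LB p q r p' q' r' : L p q r - L p' q' r' = L (p - p') (q - q') (r - r').
  by rewrite /L zmod3 !rmorphB !mulrBl.
have c00 h t : comm (iota h * (a 0 * a 0)) (iota t) =
    L (h * alpha 0 t + h * alpha 0 t) 0 (h * alpha 0 (alpha 0 t)).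
  by rewrite cm2 /L rmorphD mulrDl rmorph0 mul0r addr0.
have c10 h t : comm (iota h * (a 1 * a 0)) (iota t) =
    L (h * alpha 1 t) (h * alpha 0 t) (h * alpha 1 (alpha 0 t)) by rewrite cm2.
have c11 h t : comm (iota h * (a 1 * a 1)) (iota t) =
    L 0 (h * alpha 1 t + h * alpha 1 t) (h * alpha 1 (alpha 1 t)).
  by rewrite cm2 /L rmorphD mulrDl rmorph0 mul0r add0r.
have hh (g y : {mpoly k[3]}) : ((2%:R : k)^-1 *: g) * y + ((2%:R : k)^-1 *: g) * y = g * y.
  have two : (2%:R : k) != 0.
    by apply/negP => /eqP h2; have := hchar 2; rewrite inE /= h2 eqxx.
  have h2 : (2%:R : k)^-1 + (2%:R : k)^-1 = 1.
    by apply: (mulIf two); rewrite mulrDl mulVf // mul1r mulr2n.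
  by rewrite -mulrDl -scalerDl h2 scale1r.
have -> : omega l = L (f1 l) (f2 l) 0 by rewrite /omega /L rmorph0 addr0 addrC.
rewrite /d0 !commD c00 c10 c11 !LD LB hh hh !addr0 !add0r -hl1 -hl2 !subrr.
eexists; by rewrite /L rmorph0 !mul0r !add0r.
Qed.
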